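(* Let $a>b>0$, $c^2=a^2-b^2$, $\delta=\sqrt{a^4-a^2b^2+b^4}$, and let $E$ be the ellipse $\frac{x^2}{a^2}+\frac{y^2}{b^2}=1$. Let $C$ be the caustic of the 3-periodic billiard orbits of $E$, i.e. the ellipse $\frac{x^2}{a_c^2}+\frac{y^2}{b_c^2}=1$ with $a_c=\frac{a(\delta-b^2)}{c^2}$, $b_c=\frac{b(a^2-\delta)}{c^2}$. Let $A_b$ and $A_c$ be the areas enclosed by $E$ and $C$. Then for every 3-periodic billiard orbit in $E$, with inradius $r$ and circumradius $R$, \[ \frac{A_c}{A_b}=\frac{r}{2R}. \]
   Context: A 3-periodic billiard orbit in the ellipse $E$ is a nondegenerate triangle $P_1P_2P_3$ with all vertices on $E$ such that at each vertex $P_i$ the normal line to $E$ at $P_i$ bisects the interior angle of the triangle at $P_i$. All sides of all such orbits are tangent to the confocal ellipse $C$ described in the claim. *)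

(* Defs.v *)
From Stdlib Require Import Reals.
Open Scope R_scope.

Definition pt := (R * R)%type.

Definition on_ellipse (a b : R) (P : pt) : Prop :=
  (fst P)^2 / a^2 + (snd P)^2 / b^2 = 1.

Definition dist (P Q : pt) : R :=
  sqrt ((fst P - fst Q)^2 + (snd P - snd Q)^2).

Definition cross3 (P Q S : pt) : R :=
  (fst Q - fst P) * (snd S - snd P) - (snd Q - snd P) * (fst S - fst P).

Definition nondegenerate (P1 P2 P3 : pt) : Prop := cross3 P1 P2 P3 <> 0.

Definition bisector_dir (P Q S : pt) : pt :=
  ((fst Q - fst P) / dist P Q + (fst S - fst P) / dist P S,
   (snd Q - snd P) / dist P Q + (snd S - snd P) / dist P S).

(* The normal line to E : x^2/a^2 + y^2/b^2 = 1 at P has direction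
   (x/a^2, y/b^2); it bisects the interior angle at P iff it is parallel
   to the bisector direction (both lines pass through P). *)
Definition normal_bisects (a b : R) (P Q S : pt) : Prop :=
  let v := bisector_dir P Q S in
  (fst P / a^2) * snd v - (snd P / b^2) * fst v = 0.

Definition billiard_3orbit (a b : R) (P1 P2 P3 : pt) : Prop :=
  nondegenerate P1 P2 P3 /\
  on_ellipse a b P1 /\ on_ellipse a b P2 /\ on_ellipse a b P3 /\
  normal_bisects a b P1 P2 P3 /\ normal_bisects a b P2 P3 P1 /\
  normal_bisects a b P3 P1 P2.

Definition tri_area (P1 P2 P3 : pt) : R := Rabs (cross3 P1 P2 P3) / 2.

Definition inradius (P1 P2 P3 : pt) : R :=
  2 * tri_area P1 P2 P3 / (dist P1 P2 + dist P2 P3 + dist P3 P1).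

Definition circumradius (P1 P2 P3 : pt) : R :=
  dist P1 P2 * dist P2 P3 * dist P3 P1 / (4 * tri_area P1 P2 P3).

Definition ellipse_area (p q : R) : R := PI * p * q.

(* Main.v *)
Require Import Defs.
From Stdlib Require Import Reals Lra.
From Coquelicot Require Coquelicot.
Open Scope R_scope.

Lemma sign_lemma (a b x y vx vy wx wy : R) : 0<a -> 0<b -> x^2/a^2+y^2/b^2 = 1 ->
  vx^2+vy^2=1 -> wx^2+wy^2=1 -> vx*wy - vy*wx <> 0 ->
  (x/a^2)*(wy-vy) - (y/b^2)*(wx-vx) = 0 ->
  (x/a^2)*wx + (y/b^2)*wy = -((x/a^2)*vx + (y/b^2)*vy).
Proof.
  intros Ha Hb E Hv Hw Hx Hn.
  set (n1 := x/a^2) in *. set (n2 := y/b^2) in *.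
  assert (Hx1 : x = a^2*n1) by (unfold n1; field; lra).
  assert (Hy1 : y = b^2*n2) by (unfold n2; field; lra).
  assert (Nz : n1^2 + n2^2 <> 0).
  { intro Z. assert (n1 = 0) by nra. assert (n2 = 0) by nra.
    rewrite Hx1, Hy1, H, H0 in E. assert (E0 : (a ^ 2 * 0) ^ 2 / a ^ 2 + (b ^ 2 * 0) ^ 2 / b ^ 2 = 0) by (field; lra). lra. }
  set (p := n1*wx+n2*wy). set (q := n1*vx+n2*vy).
  assert (P2 : p^2 + (n1*wy-n2*wx)^2 = (n1^2+n2^2)*(wx^2+wy^2)) by (unfold p; ring).
  assert (Q2 : q^2 + (n1*vy-n2*vx)^2 = (n1^2+n2^2)*(vx^2+vy^2)) by (unfold q; ring).
  assert (Cr : n1*wy-n2*wx = n1*vy-n2*vx) by lra.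
  assert (PQ : (p-q)*(p+q) = 0) by (rewrite Hv, Hw in *; rewrite Cr in P2; nra).
  destruct (Rmult_integral _ _ PQ) as [H0|H0]; [|lra].
  exfalso.
  set (dx := wx - vx) in *. set (dy := wy - vy) in *.
  assert (Dz : dx^2+dy^2 <> 0).
  { intro Z. assert (dx = 0) by nra. assert (dy = 0) by nra. apply Hx.
    unfold dx, dy in *. assert (Ex : wx = vx) by lra. assert (Ey : wy = vy) by lra. rewrite Ex, Ey. ring. }
  assert (A1 : (dx^2+dy^2)*n1 = (n1*dx+n2*dy)*dx + (n1*dy - n2*dx)*dy) by ring.
  assert (A2 : (dx^2+dy^2)*n2 = (n1*dx+n2*dy)*dy - (n1*dy - n2*dx)*dx) by ring.
  assert (Z0 : n1*dx+n2*dy = 0) by (unfold dx, dy, p, q in *; lra).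
  rewrite Z0, Hn in A1, A2.
  assert (n1 = 0). { apply (Rmult_eq_reg_l (dx^2+dy^2)); auto. lra. }
  assert (n2 = 0). { apply (Rmult_eq_reg_l (dx^2+dy^2)); auto. lra. }
  apply Nz. rewrite H, H1. ring.
Qed.

Lemma chord_lemma (a b x1 y1 x2 y2 d ux uy : R) : 0<a -> 0<b ->
  x1^2/a^2+y1^2/b^2 = 1 -> x2^2/a^2+y2^2/b^2 = 1 ->
  x2 - x1 = d*ux -> y2 - y1 = d*uy -> d <> 0 ->
  (x1/a^2)*ux + (y1/b^2)*uy = -((x2/a^2)*ux + (y2/b^2)*uy).
Proof.
  intros Ha Hb E1 E2 Hx Hy Hd.
  assert (Z : d * ((x1/a^2)*ux + (y1/b^2)*uy + ((x2/a^2)*ux + (y2/b^2)*uy)) = 0).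
  { transitivity ((x1/a^2 + x2/a^2)*(x2-x1) + (y1/b^2+y2/b^2)*(y2-y1)).
    rewrite Hx, Hy. ring.
    transitivity ((x2^2/a^2+y2^2/b^2) - (x1^2/a^2+y1^2/b^2)). field; lra. lra. }
  destruct (Rmult_integral _ _ Z); [contradiction | lra].
Qed.

Lemma vertex_rel (a b x y vx vy wx wy J : R) : 0<a -> 0<b -> x^2/a^2+y^2/b^2 = 1 ->
  vx^2+vy^2=1 -> wx^2+wy^2=1 -> vx*wy - vy*wx <> 0 ->
  (x/a^2)*(wy-vy) - (y/b^2)*(wx-vx) = 0 ->
  (x/a^2)*wx + (y/b^2)*wy = J -> (x/a^2)*vx + (y/b^2)*vy = -J ->
  (vx*wx+vy*wy) - (J^2*(a^2-b^2))*(vx*wx - vy*wy) = 1 - J^2*(a^2+b^2).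
Proof.
  intros Ha Hb E Hv Hw Hx Hn HJ HJ'.
  set (n1 := x/a^2) in *. set (n2 := y/b^2) in *.
  assert (Hx1 : x = a^2*n1) by (unfold n1; field; lra).
  assert (Hy1 : y = b^2*n2) by (unfold n2; field; lra).
  assert (E' : a^2*n1^2 + b^2*n2^2 = 1).
  { rewrite <- E, Hx1, Hy1. field. lra. }
  set (dx := wx - vx) in *. set (dy := wy - vy) in *.
  assert (A1 : (dx^2+dy^2)*n1 = (n1*dx+n2*dy)*dx + (n1*dy - n2*dx)*dy) by ring.
  assert (A2 : (dx^2+dy^2)*n2 = (n1*dx+n2*dy)*dy - (n1*dy - n2*dx)*dx) by ring.
  assert (Z0 : n1*dx+n2*dy = 2*J) by (unfold dx, dy in *; lra).
  rewrite Z0, Hn in A1, A2.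
  set (e := vx*wx+vy*wy).
  assert (D2 : dx^2+dy^2 = 2 - 2*e) by (unfold dx, dy, e; nra).
  assert (F : (dx^2+dy^2)^2 = 4*J^2*(a^2*dx^2+b^2*dy^2)).
  { transitivity ((dx^2+dy^2)^2 * (a^2*n1^2 + b^2*n2^2)). rewrite E'; ring.
    transitivity (a^2*((dx^2+dy^2)*n1)^2 + b^2*((dx^2+dy^2)*n2)^2). ring.
    rewrite A1, A2. ring. }
  assert (G : a^2*dx^2+b^2*dy^2 = (1-e)*((a^2+b^2) - (a^2-b^2)*(vx*wx - vy*wy))).
  { transitivity ((1-e)*((a^2+b^2) - (a^2-b^2)*(vx*wx - vy*wy))
        + a^2*((vx^2+vy^2-1)*wy^2 + (1-vx^2)*(wx^2+wy^2-1))
        + b^2*((vx^2+vy^2-1)*wx^2 + (1-vy^2)*(wx^2+wy^2-1))).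
    unfold dx, dy, e; ring. rewrite Hv, Hw. ring. }
  assert (Ne : 1 - e <> 0).
  { intro Z. apply Hx.
    assert (dx^2+dy^2 = 0) by lra.
    assert (dx = 0) by nra. assert (dy = 0) by nra.
    unfold dx, dy in *. assert (Ex : wx = vx) by lra. assert (Ey : wy = vy) by lra. rewrite Ex, Ey. ring. }
  rewrite D2, G in F.
  assert (F2 : (1-e) * (4*(1-e) - 4*J^2*((a^2+b^2) - (a^2-b^2)*(vx*wx - vy*wy))) = 0).
  { transitivity ((2-2*e)^2 - 4 * J ^ 2 * ((1 - e) * (a ^ 2 + b ^ 2 - (a ^ 2 - b ^ 2) * (vx * wx - vy * wy)))). ring. lra. }
  destruct (Rmult_integral _ _ F2) as [H0|H0]; [contradiction|].
  fold e. lra.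
Qed.

Lemma tri_ident (x1 y1 x2 y2 x3 y3 d1 d2 d3 : R) :
  0 < d1 -> 0 < d2 -> 0 < d3 ->
  d1^2 = (x1-x2)^2+(y1-y2)^2 -> d2^2 = (x2-x3)^2+(y2-y3)^2 -> d3^2 = (x3-x1)^2+(y3-y1)^2 ->
  let cr := (x2-x1)*(y3-y1) - (y2-y1)*(x3-x1) in
  cr^2 / ((d1+d2+d3)*(d1*d2*d3)) =
  - (1 + (((x2-x1)/d1)*((x3-x2)/d2) + ((y2-y1)/d1)*((y3-y2)/d2)
        + (((x3-x2)/d2)*((x1-x3)/d3) + ((y3-y2)/d2)*((y1-y3)/d3))
        + (((x1-x3)/d3)*((x2-x1)/d1) + ((y1-y3)/d3)*((y2-y1)/d1)))) / 2.
Proof.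
  intros H1 H2 H3 E1 E2 E3 cr.
  assert (D12 : (x2-x1)*(x3-x2)+(y2-y1)*(y3-y2) = (d3^2 - d1^2 - d2^2)/2) by (rewrite E1,E2,E3; field).
  assert (D23 : (x3-x2)*(x1-x3)+(y3-y2)*(y1-y3) = (d1^2 - d2^2 - d3^2)/2) by (rewrite E1,E2,E3; field).
  assert (D31 : (x1-x3)*(x2-x1)+(y1-y3)*(y2-y1) = (d2^2 - d3^2 - d1^2)/2) by (rewrite E1,E2,E3; field).
  assert (C : cr^2 = (2*(d1^2*d2^2+d2^2*d3^2+d3^2*d1^2) - (d1^2)^2 - (d2^2)^2 - (d3^2)^2)/4).
  { unfold cr. rewrite E1, E2, E3. field. }
  assert (S : ((x2-x1)/d1)*((x3-x2)/d2) + ((y2-y1)/d1)*((y3-y2)/d2)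
        + (((x3-x2)/d2)*((x1-x3)/d3) + ((y3-y2)/d2)*((y1-y3)/d3))
        + (((x1-x3)/d3)*((x2-x1)/d1) + ((y1-y3)/d3)*((y2-y1)/d1))
        = ((x2-x1)*(x3-x2)+(y2-y1)*(y3-y2))/(d1*d2) + ((x3-x2)*(x1-x3)+(y3-y2)*(y1-y3))/(d2*d3)
          + ((x1-x3)*(x2-x1)+(y1-y3)*(y2-y1))/(d3*d1)) by (field; lra).
  rewrite S, D12, D23, D31, C. field. lra.
Qed.

Lemma final_arith (a b k : R) : 0 < b -> b < a -> 0 <= k ->
  k^2 = 3 - 2*(k/(a^2-b^2))*(a^2+b^2) ->
  let delta := sqrt (a^4 - a^2*b^2 + b^4) in
  (1 - k^2)/4 = (a*(delta - b^2)/(a^2-b^2)) * (b*(a^2-delta)/(a^2-b^2)) / (a*b).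
Proof.
  intros Hb Hab Hk E delta.
  assert (Hc : 0 < a^2-b^2) by nra.
  assert (Hc' : a^2-b^2 <> 0) by (apply Rgt_not_eq; exact Hc).
  assert (Hd0 : 0 <= a^4 - a^2*b^2 + b^4) by nra.
  assert (Dd : delta^2 = a^4 - a^2*b^2 + b^4) by (unfold delta; rewrite pow2_sqrt; auto).
  assert (Dp : 0 <= delta) by (unfold delta; apply sqrt_pos).
  assert (Q : (a^2-b^2)*k^2 + 2*(a^2+b^2)*k - 3*(a^2-b^2) = 0).
  { rewrite E. field. exact Hc'. }
  assert (F : (k - (2*delta - a^2 - b^2)/(a^2-b^2)) * (k - (-2*delta - a^2-b^2)/(a^2-b^2)) = 0).
  { transitivity (((a^2-b^2)*k^2 + 2*(a^2+b^2)*k - 3*(a^2-b^2))/(a^2-b^2)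
       + ((a^2+b^2)^2 + 3*(a^2-b^2)^2 - 4*delta^2)/(a^2-b^2)^2).
    field. exact Hc'. rewrite Q, Dd. field. exact Hc'. }
  assert (Hneg : (-2*delta - a^2-b^2)/(a^2-b^2) < 0).
  { unfold Rdiv. assert (0 < / (a^2-b^2)) by (apply Rinv_0_lt_compat; exact Hc). nra. }
  destruct (Rmult_integral _ _ F) as [F1|F1]; [|lra].
  assert (Ek : k = (2*delta - a^2 - b^2)/(a^2-b^2)) by lra.
  rewrite Ek. field. split; [exact Hc'|]. split; lra.
Qed.

Module CX.
Import Coquelicot.Coquelicot.
Open Scope C_scope.

Definition Bq (k L : R) (x y : C) : C :=
  x*x + y*y - RtoC k*(x*x*y*y) - RtoC k - 2*RtoC L*x*y.

Lemma cancel_l (a x : C) : a <> 0 -> a * x = 0 -> x = 0.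
Proof. intros Ha H. replace x with (/a * (a*x)) by (field; auto). rewrite H. ring. Qed.

Lemma sub_neq (x y : C) : x <> y -> x - y <> 0.
Proof. intros H E. apply H. replace x with ((x - y) + y) by ring. rewrite E. ring. Qed.

Lemma cplx_core (z1 z2 z3 : C) (k L : R) :
  z1 <> z2 -> z2 <> z3 -> z3 <> z1 ->
  Bq k L z1 z2 = 0 -> Bq k L z2 z3 = 0 -> Bq k L z3 z1 = 0 ->
  RtoC k * (z1*z2+z2*z3+z3*z1) = -(1+2*RtoC L) /\ (z1+z2+z3) + RtoC k*(z1*z2*z3) = 0.
Proof.
  intros n12 n23 n31 B12 B23 B31. unfold Bq in *.
  assert (C1 : (z2+z3)*(1 - RtoC k*(z1*z1)) - 2*RtoC L*z1 = 0).
  { apply (cancel_l (z2 - z3)). apply sub_neq; auto.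
    transitivity ((z1 * z1 + z2 * z2 - RtoC k * (z1 * z1 * z2 * z2) - RtoC k - 2 * RtoC L * z1 * z2) -
      (z3 * z3 + z1 * z1 - RtoC k * (z3 * z3 * z1 * z1) - RtoC k - 2 * RtoC L * z3 * z1)).
    ring. rewrite B12, B31. ring. }
  assert (C2 : (z1+z3)*(1 - RtoC k*(z2*z2)) - 2*RtoC L*z2 = 0).
  { apply (cancel_l (z3 - z1)). apply sub_neq; auto.
    transitivity ((z2 * z2 + z3 * z3 - RtoC k * (z2 * z2 * z3 * z3) - RtoC k - 2 * RtoC L * z2 * z3) -
      (z1 * z1 + z2 * z2 - RtoC k * (z1 * z1 * z2 * z2) - RtoC k - 2 * RtoC L * z1 * z2)).
    ring. rewrite B12, B23. ring. }
  assert (E2 : 1 + RtoC k*(z1*z2+z2*z3+z3*z1) + 2*RtoC L = 0).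
  { apply (cancel_l (z1 - z2)). apply sub_neq; auto.
    transitivity (- ((z2+z3)*(1 - RtoC k*(z1*z1)) - 2*RtoC L*z1) + ((z1+z3)*(1 - RtoC k*(z2*z2)) - 2*RtoC L*z2)).
    ring. rewrite C1, C2. ring. }
  split.
  - transitivity ((1 + RtoC k*(z1*z2+z2*z3+z3*z1) + 2*RtoC L) - (1 + 2*RtoC L)). ring.
    rewrite E2. ring.
  - transitivity (((z2+z3)*(1 - RtoC k*(z1*z1)) - 2*RtoC L*z1) + z1*(1 + RtoC k*(z1*z2+z2*z3+z3*z1) + 2*RtoC L)).
    ring. rewrite C1, E2. ring.
Qed.

Lemma pair_neq (c1 s1 c2 s2 : R) : (c1*s2 - s1*c2 <> 0)%R -> ((c1,s1):C) <> (c2,s2).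
Proof. intros H E. inversion E. subst. apply H. ring. Qed.

Lemma B_zero (ci si cj sj k L : R) :
  (ci^2+si^2 = 1)%R -> (cj^2+sj^2 = 1)%R ->
  ((ci*cj+si*sj) - k*(ci*cj - si*sj) = L)%R ->
  Bq k L (ci,si) (cj,sj) = 0 /\ Bq k L (ci,(-si)%R) (cj,(-sj)%R) = 0.
Proof.
  intros Hi Hj Hr.
  assert (Gen : forall zi wi zj wj : C, zi*wi = 1 -> zj*wj = 1 ->
     zi*wj + wi*zj - RtoC k*(zi*zj + wi*wj) - 2*RtoC L = 0 -> Bq k L zi zj = 0).
  { intros zi wi zj wj H1 H2 H3. unfold Bq.
    transitivity (zi*zj*(zi*wj + wi*zj - RtoC k*(zi*zj + wi*wj) - 2*RtoC L)
       + zi*zi*(1 - zj*wj) + zj*zj*(1 - zi*wi) - RtoC k*(1 - (zi*wi)*(zj*wj))).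
    ring. rewrite H1, H2, H3. ring. }
  assert (U : forall c s : R, (c^2+s^2 = 1)%R -> ((c,s):C) * (c,(-s)%R) = 1 /\ ((c,(-s)%R):C) * (c,s) = 1).
  { intros c s H. split; apply injective_projections; simpl; unfold RtoC; simpl; nra. }
  destruct (U ci si Hi) as [Ui Ui']. destruct (U cj sj Hj) as [Uj Uj'].
  split.
  - apply (Gen _ (ci,(-si)%R) _ (cj,(-sj)%R)); auto.
    apply injective_projections; simpl; unfold RtoC; simpl; nra.
  - apply (Gen _ (ci,si) _ (cj,sj)); auto.
    apply injective_projections; simpl; unfold RtoC; simpl; nra.
Qed.

Lemma C01 : (0:C) <> 1.
Proof. intro E. apply (f_equal fst) in E. simpl in E. lra. Qed.

Lemma cplx_real (c1 s1 c2 s2 c3 s3 k L : R) :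
  (c1^2+s1^2 = 1)%R -> (c2^2+s2^2 = 1)%R -> (c3^2+s3^2 = 1)%R ->
  ((c1*c2+s1*s2) - k*(c1*c2 - s1*s2) = L)%R ->
  ((c2*c3+s2*s3) - k*(c2*c3 - s2*s3) = L)%R ->
  ((c3*c1+s3*s1) - k*(c3*c1 - s3*s1) = L)%R ->
  (c1*s2 - s1*c2 <> 0)%R -> (c2*s3 - s2*c3 <> 0)%R -> (c3*s1 - s3*c1 <> 0)%R ->
  (k^2 = 1 + 2*L /\ 2*((c1*c2+s1*s2)+(c2*c3+s2*s3)+(c3*c1+s3*s1)) = k^2 - 3)%R.
Proof.
  intros H1 H2 H3 R12 R23 R31 X12 X23 X31.
  destruct (B_zero _ _ _ _ k L H1 H2 R12) as [B12 B12'].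
  destruct (B_zero _ _ _ _ k L H2 H3 R23) as [B23 B23'].
  destruct (B_zero _ _ _ _ k L H3 H1 R31) as [B31 B31'].
  set (z1 := ((c1,s1):C)) in *. set (z2 := ((c2,s2):C)) in *. set (z3 := ((c3,s3):C)) in *.
  set (w1 := ((c1,(-s1)%R):C)) in *. set (w2 := ((c2,(-s2)%R):C)) in *. set (w3 := ((c3,(-s3)%R):C)) in *.
  assert (n12 : z1 <> z2) by (apply pair_neq; auto).
  assert (n23 : z2 <> z3) by (apply pair_neq; auto).
  assert (n31 : z3 <> z1) by (apply pair_neq; auto).
  assert (m12 : w1 <> w2) by (apply pair_neq; intro; apply X12; lra).
  assert (m23 : w2 <> w3) by (apply pair_neq; intro; apply X23; lra).
  assert (m31 : w3 <> w1) by (apply pair_neq; intro; apply X31; lra).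
  destruct (cplx_core z1 z2 z3 k L n12 n23 n31 B12 B23 B31) as [Ez2 Ez1].
  destruct (cplx_core w1 w2 w3 k L m12 m23 m31 B12' B23' B31') as [Ew2 Ew1].
  assert (U : forall c s : R, (c^2+s^2 = 1)%R -> ((c,s):C) * (c,(-s)%R) = 1).
  { intros c s H. apply injective_projections; simpl; unfold RtoC; simpl; nra. }
  assert (U1 : z1*w1 = 1) by (apply U; auto).
  assert (U2 : z2*w2 = 1) by (apply U; auto).
  assert (U3 : z3*w3 = 1) by (apply U; auto).
  assert (Z3 : z1*z2*z3 <> 0).
  { intro E. assert (E' : (z1*z2*z3)*(w1*w2*w3) = 1).
    { transitivity ((z1*w1)*(z2*w2)*(z3*w3)). ring. rewrite U1, U2, U3. ring. }
    rewrite E in E'. apply C01. rewrite <- E'. ring. }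
  assert (Q1 : z1*z2*z3*(w1*w2+w2*w3+w3*w1) - (z1+z2+z3) = 0).
  { transitivity (z3*(z1*w1)*(z2*w2) + z1*(z2*w2)*(z3*w3) + z2*(z3*w3)*(z1*w1) - (z1+z2+z3)). ring.
    rewrite U1, U2, U3. ring. }
  assert (Q2 : z1*z2*z3*(w1+w2+w3) - (z1*z2+z2*z3+z3*z1) = 0).
  { transitivity (z2*z3*(z1*w1) + z1*z3*(z2*w2) + z1*z2*(z3*w3) - (z1*z2+z2*z3+z3*z1)). ring.
    rewrite U1, U2, U3. ring. }
  assert (Ew2' : RtoC k * (w1*w2+w2*w3+w3*w1) + (1+2*RtoC L) = 0).
  { rewrite Ew2. ring. }
  assert (Ez2' : RtoC k * (z1*z2+z2*z3+z3*z1) + (1+2*RtoC L) = 0).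
  { rewrite Ez2. ring. }
  assert (K2 : RtoC k * RtoC k - (1 + 2*RtoC L) = 0).
  { apply (cancel_l (z1*z2*z3)); auto.
    transitivity (RtoC k * ((z1+z2+z3) + RtoC k*(z1*z2*z3))
         + RtoC k * (z1*z2*z3*(w1*w2+w2*w3+w3*w1) - (z1+z2+z3))
         - (z1*z2*z3) * (RtoC k * (w1*w2+w2*w3+w3*w1) + (1+2*RtoC L))).
    ring. rewrite Ez1, Q1, Ew2'. ring. }
  set (S := z1*w2 + w1*z2 + (z2*w3 + w2*z3) + (z3*w1 + w3*z1)).
  assert (ES : (z1+z2+z3)*(w1+w2+w3) - (3 + S) = 0).
  { unfold S. transitivity ((z1*w1 - 1) + (z2*w2 - 1) + (z3*w3 - 1)). ring.
    rewrite U1, U2, U3. ring. }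
  assert (K3 : S - (RtoC k * RtoC k - 3) = 0).
  { apply (cancel_l (z1*z2*z3)); auto.
    transitivity (- (z1*z2*z3) * ((z1+z2+z3)*(w1+w2+w3) - (3 + S))
       + (z1+z2+z3) * (z1*z2*z3*(w1+w2+w3) - (z1*z2+z2*z3+z3*z1))
       + (z1*z2+z2*z3+z3*z1) * ((z1+z2+z3) + RtoC k*(z1*z2*z3))
       - (z1*z2*z3) * (RtoC k * (z1*z2+z2*z3+z3*z1) + (1+2*RtoC L))
       - (z1*z2*z3) * (RtoC k * RtoC k - (1 + 2*RtoC L))).
    ring. rewrite ES, Q2, Ez1, Ez2', K2. ring. }
  apply (f_equal fst) in K2. apply (f_equal fst) in K3.
  unfold S, z1, z2, z3, w1, w2, w3 in K3. simpl in K2, K3.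
  split; nra.
Qed.

End CX.

Lemma sumsq0 (p q : R) : p^2 + q^2 = 0 -> p = 0 /\ q = 0.
Proof.
  intros H. pose proof (pow2_ge_0 p). pose proof (pow2_ge_0 q).
  assert (Hp : p^2 = 0) by lra. assert (Hq : q^2 = 0) by lra.
  split.
  - assert (Hp' : p*p = 0) by (rewrite <- Hp; ring). destruct (Rmult_integral _ _ Hp'); auto.
  - assert (Hq' : q*q = 0) by (rewrite <- Hq; ring). destruct (Rmult_integral _ _ Hq'); auto.
Qed.

Lemma dist_sym (P Q : pt) : Defs.dist P Q = Defs.dist Q P.
Proof. unfold Defs.dist. f_equal. ring. Qed.

Lemma dist_facts (x1 y1 x2 y2 : R) : (x1 - x2)^2 + (y1 - y2)^2 <> 0 ->
  0 < Defs.dist (x1,y1) (x2,y2) /\ (Defs.dist (x1,y1) (x2,y2))^2 = (x1-x2)^2+(y1-y2)^2.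
Proof.
  intros H. unfold Defs.dist; cbn [fst snd]. split.
  - apply sqrt_lt_R0. assert (0 <= (x1 - x2)^2) by apply pow2_ge_0.
    assert (0 <= (y1 - y2)^2) by apply pow2_ge_0. lra.
  - rewrite pow2_sqrt; [reflexivity|].
    assert (0 <= (x1 - x2)^2) by apply pow2_ge_0.
    assert (0 <= (y1 - y2)^2) by apply pow2_ge_0. lra.
Qed.

Theorem theorem3 (a b : R) (hb : 0 < b) (hab : b < a) :
  let c2 := a^2 - b^2 in
  let delta := sqrt (a^4 - a^2 * b^2 + b^4) in
  let ac := a * (delta - b^2) / c2 in
  let bc := b * (a^2 - delta) / c2 in
  forall P1 P2 P3 : pt,
    billiard_3orbit a b P1 P2 P3 ->
    ellipse_area ac bc / ellipse_area a b
      = inradius P1 P2 P3 / (2 * circumradius P1 P2 P3).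
Proof.
  intros c2 delta ac bc [x1 y1] [x2 y2] [x3 y3] H.
  assert (ha : 0 < a) by lra.
  destruct H as (Hnd & E1 & E2 & E3 & N1 & N2 & N3).
  unfold nondegenerate, cross3 in Hnd; cbn [fst snd] in Hnd.
  unfold on_ellipse in E1, E2, E3; cbn [fst snd] in E1, E2, E3.
  unfold normal_bisects, bisector_dir in N1, N2, N3; cbn [fst snd] in N1, N2, N3.
  rewrite (dist_sym (x1,y1) (x3,y3)) in N1.
  rewrite (dist_sym (x2,y2) (x1,y1)) in N2.
  rewrite (dist_sym (x3,y3) (x2,y2)) in N3.
  set (cr := (x2 - x1) * (y3 - y1) - (y2 - y1) * (x3 - x1)) in *.
  assert (S1 : (x1 - x2)^2 + (y1 - y2)^2 <> 0).
  { intro Z. apply Hnd. destruct (sumsq0 _ _ Z) as [Z1 Z2]. assert (H : x1 = x2) by lra. assert (H0 : y1 = y2) by lra.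
    unfold cr. rewrite H, H0. ring. }
  assert (S2 : (x2 - x3)^2 + (y2 - y3)^2 <> 0).
  { intro Z. apply Hnd. destruct (sumsq0 _ _ Z) as [Z1 Z2]. assert (H : x2 = x3) by lra. assert (H0 : y2 = y3) by lra.
    unfold cr. rewrite H, H0. ring. }
  assert (S3 : (x3 - x1)^2 + (y3 - y1)^2 <> 0).
  { intro Z. apply Hnd. destruct (sumsq0 _ _ Z) as [Z1 Z2]. assert (H : x3 = x1) by lra. assert (H0 : y3 = y1) by lra.
    unfold cr. rewrite H, H0. ring. }
  destruct (dist_facts _ _ _ _ S1) as [Hd1 Ed1].
  destruct (dist_facts _ _ _ _ S2) as [Hd2 Ed2].
  destruct (dist_facts _ _ _ _ S3) as [Hd3 Ed3].
  set (d1 := Defs.dist (x1,y1) (x2,y2)) in *.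
  set (d2 := Defs.dist (x2,y2) (x3,y3)) in *.
  set (d3 := Defs.dist (x3,y3) (x1,y1)) in *.
  set (u1x := (x2-x1)/d1). set (u1y := (y2-y1)/d1).
  set (u2x := (x3-x2)/d2). set (u2y := (y3-y2)/d2).
  set (u3x := (x1-x3)/d3). set (u3y := (y1-y3)/d3).
  assert (U1 : u1x^2+u1y^2 = 1).
  { unfold u1x, u1y. transitivity (((x1-x2)^2+(y1-y2)^2)/d1^2). field; lra. rewrite <- Ed1. field; lra. }
  assert (U2 : u2x^2+u2y^2 = 1).
  { unfold u2x, u2y. transitivity (((x2-x3)^2+(y2-y3)^2)/d2^2). field; lra. rewrite <- Ed2. field; lra. }
  assert (U3 : u3x^2+u3y^2 = 1).
  { unfold u3x, u3y. transitivity (((x3-x1)^2+(y3-y1)^2)/d3^2). field; lra. rewrite <- Ed3. field; lra. }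
  assert (X12 : u1x*u2y - u1y*u2x <> 0).
  { replace (u1x*u2y - u1y*u2x) with (cr/(d1*d2)) by (unfold u1x,u1y,u2x,u2y,cr; field; lra).
    unfold Rdiv. apply Rmult_integral_contrapositive_currified; auto.
    apply Rinv_neq_0_compat. nra. }
  assert (X23 : u2x*u3y - u2y*u3x <> 0).
  { replace (u2x*u3y - u2y*u3x) with (cr/(d2*d3)) by (unfold u3x,u3y,u2x,u2y,cr; field; lra).
    unfold Rdiv. apply Rmult_integral_contrapositive_currified; auto.
    apply Rinv_neq_0_compat. nra. }
  assert (X31 : u3x*u1y - u3y*u1x <> 0).
  { replace (u3x*u1y - u3y*u1x) with (cr/(d3*d1)) by (unfold u3x,u3y,u1x,u1y,cr; field; lra).
    unfold Rdiv. apply Rmult_integral_contrapositive_currified; auto.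
    apply Rinv_neq_0_compat. nra. }
  assert (M1 : (x1/a^2)*(u1y-u3y) - (y1/b^2)*(u1x-u3x) = 0).
  { rewrite <- N1. unfold u1x,u1y,u3x,u3y. field. lra. }
  assert (M2 : (x2/a^2)*(u2y-u1y) - (y2/b^2)*(u2x-u1x) = 0).
  { rewrite <- N2. unfold u1x,u1y,u2x,u2y. field. lra. }
  assert (M3 : (x3/a^2)*(u3y-u2y) - (y3/b^2)*(u3x-u2x) = 0).
  { rewrite <- N3. unfold u3x,u3y,u2x,u2y. field. lra. }
  set (J := (x1/a^2)*u1x + (y1/b^2)*u1y).
  assert (Ch1 := chord_lemma a b x1 y1 x2 y2 d1 u1x u1y ha hb E1 E2
                  ltac:(unfold u1x; field; lra) ltac:(unfold u1y; field; lra) ltac:(lra)).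
  assert (Ch2 := chord_lemma a b x2 y2 x3 y3 d2 u2x u2y ha hb E2 E3
                  ltac:(unfold u2x; field; lra) ltac:(unfold u2y; field; lra) ltac:(lra)).
  assert (Sg1 := sign_lemma a b x1 y1 u3x u3y u1x u1y ha hb E1 U3 U1 X31 M1).
  assert (Sg2 := sign_lemma a b x2 y2 u1x u1y u2x u2y ha hb E2 U1 U2 X12 M2).
  assert (Sg3 := sign_lemma a b x3 y3 u2x u2y u3x u3y ha hb E3 U2 U3 X23 M3).
  assert (R31 := vertex_rel a b x1 y1 u3x u3y u1x u1y J ha hb E1 U3 U1 X31 M1
                   ltac:(reflexivity) ltac:(fold J in Sg1; lra)).
  assert (R12 := vertex_rel a b x2 y2 u1x u1y u2x u2y J ha hb E2 U1 U2 X12 M2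
                   ltac:(fold J in Ch1; lra) ltac:(fold J in Ch1; lra)).
  assert (R23 := vertex_rel a b x3 y3 u2x u2y u3x u3y J ha hb E3 U2 U3 X23 M3
                   ltac:(fold J in Ch1; lra) ltac:(fold J in Ch1; lra)).
  set (k := J^2*(a^2-b^2)) in *.
  set (L := 1 - J^2*(a^2+b^2)) in *.
  destruct (CX.cplx_real u1x u1y u2x u2y u3x u3y k L U1 U2 U3 R12 R23
     ltac:(rewrite <- R31; ring) X12 X23 X31) as [K1 K2].
  assert (T := tri_ident x1 y1 x2 y2 x3 y3 d1 d2 d3 Hd1 Hd2 Hd3 Ed1 Ed2 Ed3).
  cbv zeta in T. fold cr in T. fold u1x u1y u2x u2y u3x u3y in T.
  assert (Hk : 0 <= k) by (unfold k; apply Rmult_le_pos; [apply pow2_ge_0 | assert (0 < a^2-b^2) by (clear - hb hab; nra); lra]).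
  assert (Kq : k^2 = 3 - 2*(k/(a^2-b^2))*(a^2+b^2)).
  { assert (Hc0 : 0 < a^2-b^2) by (clear - hb hab; nra).
    assert (Hc' : a^2-b^2 <> 0) by (apply Rgt_not_eq; exact Hc0).
    rewrite K1. unfold L, k. field. exact Hc'. }
  assert (FA := final_arith a b k hb hab Hk Kq). cbv zeta in FA. fold delta in FA.
  unfold ellipse_area, inradius, circumradius, tri_area, cross3. cbn [fst snd]. fold cr d1 d2 d3.
  assert (Hcr : Rabs cr <> 0) by (apply Rabs_no_R0; auto).
  assert (RR : Rabs cr * Rabs cr = cr^2) by (rewrite <- Rabs_mult; rewrite Rabs_right; [ring| apply Rle_ge; apply (Rle_0_sqr cr)]).
  transitivity (ac*bc/(a*b)). { field. repeat split; first [lra | apply PI_neq0]. }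
  transitivity (cr^2 / ((d1+d2+d3)*(d1*d2*d3))).
  2: { rewrite <- RR. field. repeat split; first [lra | assumption]. }
  rewrite T. unfold ac, bc, c2. rewrite <- FA. lra.
Qed.
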